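(* Let $V$ be a real sequence with $\liminf_{n\to\infty}V_n>C>0$, fix a positive integer $m$, and let $\varphi^-$ be the subdominant solution of $(-\Delta+V)\varphi=0$. Then, with $K_A:=\sqrt{1+\left(\frac{2}{C(C+2)}\right)^2}+\frac{2}{C(C+2)}$: (a) $\left(\prod_{\ell=m}^n\frac{V_\ell+2}{K_A}\right)\varphi^-_n\in\ell^\infty$ (as a sequence in $n$); (b) if in addition $V_{n+1}-V_n\in\ell^1$, then $\left(\prod_{\ell=m}^n\frac{V_\ell+2+\sqrt{V_\ell(V_\ell+4)}}{2}\right)\varphi^-_n\in\ell^\infty$.
   Context: $(\Delta f)_n=f_{n+1}+f_{n-1}-2f_n$; $(-\Delta+V)\varphi=0$ means $-\varphi_{n+1}-\varphi_{n-1}+(2+V_n)\varphi_n=0$. The subdominant solution is a nonzero solution decreasing to $0$ at infinity (square-summable), unique up to a multiplicative constant. *)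

(* Defs.v *)
From Stdlib Require Import Reals.
From Coquelicot Require Import Coquelicot.
Open Scope R_scope.

Fixpoint prod_lt (f : nat -> R) (n : nat) : R :=
  match n with
  | O => 1
  | S k => prod_lt f k * f k
  end.

(* \prod_{l = m}^{n} f l  (empty product = 1 when n < m) *)
Definition prod_range (f : nat -> R) (m n : nat) : R :=
  prod_lt (fun l => if Nat.leb m l then f l else 1) (S n).

(* (-Delta + V) phi = 0 on the half-line: for every n >= 1,
   -phi_{n+1} - phi_{n-1} + (2 + V_n) phi_n = 0 *)
Definition solves (V phi : nat -> R) : Prop :=
  forall n : nat, (1 <= n)%nat ->
    - phi (S n) - phi (pred n) + (2 + V n) * phi n = 0.

Definition l2 (u : nat -> R) : Prop := ex_series (fun n => (u n) ^ 2).

Definition subdominant (V phi : nat -> R) : Prop :=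
  solves V phi /\ (exists n, phi n <> 0) /\ l2 phi.

Definition linf (u : nat -> R) : Prop := exists M : R, forall n, Rabs (u n) <= M.

Definition l1 (u : nat -> R) : Prop := ex_series (fun n => Rabs (u n)).

Definition K_A (C : R) : R :=
  sqrt (1 + (2 / (C * (C + 2))) ^ 2) + 2 / (C * (C + 2)).

(* Main.v *)
Require Import Defs.
From Stdlib Require Import Reals Lra Lia Psatz.
From Coquelicot Require Import Coquelicot.
Open Scope R_scope.

Fixpoint fs (f : nat -> R) (k : nat) : R :=
  match k with O => 0 | S k => fs f k + f k end.

Lemma fs_ext f g k : (forall j, (j < k)%nat -> f j = g j) -> fs f k = fs g k.
Proof. induction k; simpl; intros H; auto. rewrite IHk by (intros; apply H; lia). rewrite (H k) by lia; auto. Qed.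

Lemma fs_le f g k : (forall j, (j < k)%nat -> f j <= g j) -> fs f k <= fs g k.
Proof. induction k; simpl; intros H; [lra|]. assert (H1 := H k ltac:(lia)). assert (fs f k <= fs g k) by (apply IHk; intros; apply H; lia). lra. Qed.

Lemma fs_nonneg f k : (forall j, 0 <= f j) -> 0 <= fs f k.
Proof. induction k; simpl; intros H; [lra|]. specialize (IHk H). specialize (H k). lra. Qed.

Lemma fs_shift g k : fs (fun j => g (S j)) k + g O = fs g k + g k.
Proof. induction k; simpl; lra. Qed.

Lemma fs_add a n k : fs a (n + k) = fs a n + fs (fun j => a (n + j)%nat) k.
Proof. induction k; simpl. rewrite Nat.add_0_r; lra. rewrite Nat.add_succ_r. simpl. rewrite IHk. lra. Qed.

Lemma fs_scal c f k : fs (fun j => c * f j) k = c * fs f k.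
Proof. induction k; simpl; [lra|]. rewrite IHk; lra. Qed.

Lemma fs_plus f g k : fs (fun j => f j + g j) k = fs f k + fs g k.
Proof. induction k; simpl; [lra|]. rewrite IHk; lra. Qed.

Lemma fs_elem f n k : (forall j, 0 <= f j) -> (n < k)%nat -> f n <= fs f k.
Proof. induction k; intros H Hn; [lia|]. simpl. destruct (Nat.eq_dec n k).
 subst. assert (0 <= fs f k) by (apply fs_nonneg; auto). lra.
 assert (f n <= fs f k) by (apply IHk; auto; lia). specialize (H k). lra. Qed.

Lemma fs_sum_n a k : fs a (S k) = sum_n a k.
Proof. induction k. simpl. rewrite sum_O. lra. rewrite sum_Sn. change (fs a (S (S k))) with (fs a (S k) + a (S k)). rewrite IHk. reflexivity. Qed.

Lemma fs_le_series a k : (forall n, 0 <= a n) -> ex_series a -> fs a k <= Series a.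
Proof. intros H E. assert (L : is_lim_seq (sum_n a) (Series a)) by (apply (Series_correct _ E)).
 assert (M : forall n, sum_n a n <= sum_n a (S n)). { intros n. rewrite sum_Sn. specialize (H (S n)). unfold plus; simpl. lra. }
 destruct k. simpl. assert (B := is_lim_seq_incr_compare _ _ L M 0). rewrite sum_O in B. specialize (H 0%nat). lra.
 rewrite fs_sum_n. apply (is_lim_seq_incr_compare _ _ L M). Qed.

Lemma prod_range_S f m n : prod_range f m (S n) = prod_range f m n * (if Nat.leb m (S n) then f (S n) else 1).
Proof. reflexivity. Qed.

Lemma ev_C V C : Rbar_lt (Finite C) (LimInf_seq V) -> exists N, forall k, (N <= k)%nat -> C < V k.
Proof. intros H. destruct (ex_LimInf_seq V) as [l Hl]. rewrite (is_LimInf_seq_unique _ _ Hl) in H.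
 destruct l as [l| |]; simpl in *.
 - assert (E : 0 < l - C) by lra. destruct (Hl (mkposreal _ E)) as [_ [N HN]]. exists N. intros k Hk. specialize (HN k Hk). simpl in HN. lra.
 - destruct (Hl C) as [N HN]. exists N; auto.
 - contradiction. Qed.

Lemma rec_S V phi k : solves V phi -> (1 <= k)%nat -> phi (S k) = (2 + V k) * phi k - phi (pred k).
Proof. intros H Hk. specialize (H k Hk). lra. Qed.

Lemma zeros V phi n : solves V phi -> phi n = 0 -> phi (S n) = 0 -> forall k, phi k = 0.
Proof. intros H H0 H1.
 assert (F : forall j, phi (n + j)%nat = 0 /\ phi (S (n + j)) = 0).
 { induction j. rewrite Nat.add_0_r; auto. destruct IHj as [A B]. rewrite Nat.add_succ_r. split; auto.
   rewrite (rec_S V phi (S (n+j))) by (auto; lia). simpl pred. rewrite A, B. ring. }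
 assert (Bk : forall j, (j <= n)%nat -> phi (n - j)%nat = 0 /\ phi (S (n - j)) = 0).
 { induction j; intros Hj. rewrite Nat.sub_0_r; auto. destruct (IHj ltac:(lia)) as [A B].
   split. 2:{ replace (S (n - S j)) with (n - j)%nat by lia. auto. }
   specialize (H (n - j)%nat ltac:(lia)). replace (pred (n - j)) with (n - S j)%nat in H by lia. rewrite A, B in H. lra. }
 intros k. destruct (Nat.le_gt_cases n k).
 replace k with (n + (k - n))%nat by lia. apply F.
 replace k with (n - (n - k))%nat by lia. apply Bk; lia. Qed.

Lemma setup V C m phi : 0 < C -> Rbar_lt (Finite C) (LimInf_seq V) -> subdominant V phi ->
  exists N, (m <= N)%nat /\ (1 <= N)%nat /\ (forall k, (N <= k)%nat -> C < V k) /\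
    (forall k, (N <= k)%nat -> phi k <> 0) /\ (forall k, (N <= k)%nat -> Rabs (phi (S k)) < Rabs (phi k)).
Proof. intros HC HL [Hs [Hnz Hl2]]. destruct (ev_C V C HL) as [N0 HN0].
 set (N1 := (N0 + 1)%nat).
 assert (grow : forall n, (N1 <= n)%nat -> Rabs (phi n) <= Rabs (phi (S n)) ->
     forall j, Rabs (phi (n + j)%nat) <= Rabs (phi (S (n + j)))).
 { intros n Hn H0 j. induction j. rewrite Nat.add_0_r; auto.
   rewrite Nat.add_succ_r. rewrite (rec_S V phi (S (n + j))) by (auto; lia). simpl pred.
   assert (HV : C < V (S (n + j))) by (apply HN0; lia).
   assert (T := Rabs_triang_inv ((2 + V (S (n + j))) * phi (S (n + j))) (phi (n + j)%nat)).
   rewrite Rabs_mult, (Rabs_pos_eq (2 + _)) in T by lra.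
   assert (0 <= Rabs (phi (S (n + j)))) by apply Rabs_pos. nra. }
 assert (dec : forall n, (N1 <= n)%nat -> phi (S n) <> 0 -> Rabs (phi (S n)) < Rabs (phi n)).
 { intros n Hn Hne. apply Rnot_le_lt. intros Hle.
   assert (G : forall j, Rabs (phi (S n)) <= Rabs (phi (S n + j)%nat)).
   { induction j. rewrite Nat.add_0_r; lra. rewrite Nat.add_succ_r.
     specialize (grow n Hn Hle (S j)). rewrite Nat.add_succ_r in grow. simpl in *. lra. }
   assert (L := ex_series_lim_0 _ Hl2). apply is_lim_seq_spec in L.
   assert (E : 0 < (phi (S n)) ^ 2). { apply Rabs_pos_lt in Hne. rewrite <- pow2_abs. nra. }
   destruct (L (mkposreal _ E)) as [M HM]. specialize (HM (S n + M)%nat ltac:(lia)). simpl in HM.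
   specialize (G M). rewrite Rminus_0_r in HM. rewrite Rabs_pos_eq in HM by nra.
   assert (0 <= Rabs (phi (S n))) by apply Rabs_pos.
   assert (Rabs (phi (S n)) ^ 2 <= Rabs (phi (S n + M)%nat) ^ 2) by nra.
   rewrite !pow2_abs in H0. simpl in H0. lra. }
 assert (nz : forall n, (N1 <= n)%nat -> phi n <> 0).
 { intros n Hn H0. destruct (Req_dec (phi (S n)) 0) as [H1|H1].
   - destruct Hnz as [k Hk]. apply Hk. apply (zeros V phi n); auto.
   - specialize (dec n Hn H1). rewrite H0, Rabs_R0 in dec. assert (T := Rabs_pos (phi (S n))). lra. }
 exists (N1 + m)%nat. split; [lia|]. split; [lia|]. split; [intros; apply HN0; lia|]. split.
 intros; apply nz; lia. intros k Hk. apply dec. lia. apply nz; lia.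
Qed.
Lemma linf_of P N B : (forall k, Rabs (P (N + k)%nat) <= B) -> linf P.
Proof. intros H. exists (B + fs (fun j => Rabs (P j)) N). intros n.
 assert (0 <= fs (fun j => Rabs (P j)) N) by (apply fs_nonneg; intros; apply Rabs_pos).
 destruct (Nat.le_gt_cases N n).
 - replace n with (N + (n - N))%nat by lia. specialize (H (n - N)%nat). lra.
 - assert (A := fs_elem (fun j => Rabs (P j)) n N ltac:(intros; apply Rabs_pos) H1). simpl in A.
   specialize (H O). assert (T := Rabs_pos (P (N + 0)%nat)). lra. Qed.

Lemma rfacts V C phi N : 0 < C -> solves V phi -> (1 <= N)%nat -> (forall k, (N <= k)%nat -> C < V k) ->
    (forall k, (N <= k)%nat -> phi k <> 0) -> (forall k, (N <= k)%nat -> Rabs (phi (S k)) < Rabs (phi k)) ->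
  forall k, (N <= k)%nat ->
   phi k / phi (S k) = 2 + V (S k) - / (phi (S k) / phi (S (S k))) /\ 1 + C < phi k / phi (S k).
Proof. intros HC Hs HN HV Hnz Hd k Hk.
 assert (n0 := Hnz k Hk). assert (n1 := Hnz (S k) ltac:(lia)). assert (n2 := Hnz (S (S k)) ltac:(lia)).
 assert (E : phi k / phi (S k) = 2 + V (S k) - / (phi (S k) / phi (S (S k)))).
 { assert (R := Hs (S k) ltac:(lia)). simpl pred in R. field_simplify; auto. apply Rmult_eq_reg_r with (phi (S k)); auto.
   field_simplify; auto. lra. }
 split; auto. rewrite E.
 assert (A : Rabs (/ (phi (S k) / phi (S (S k)))) < 1).
 { replace (/ (phi (S k) / phi (S (S k)))) with (phi (S (S k)) / phi (S k)) by (field; auto).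
   rewrite Rabs_div by auto. apply Rabs_pos_lt in n1. apply (Rmult_lt_reg_r (Rabs (phi (S k)))); auto.
   field_simplify; try lra. apply Hd; lia. }
 assert (HV1 := HV (S k) ltac:(lia)). apply Rabs_def2 in A. lra. Qed.

Lemma KA_ineq C v x : 0 < C -> C < v -> 0 < x -> x * (1 + C) < 1 -> v + 2 <= K_A C * (v + 2 - x).
Proof. intros HC Hv Hx Hx2. unfold K_A. set (t := 2 / (C * (C + 2))).
 assert (Ht : t * (C * (C + 2)) = 2) by (unfold t; field; lra).
 assert (t0 : 0 < t) by (unfold t; apply Rdiv_lt_0_compat; nra).
 assert (s1 : 1 <= sqrt (1 + t ^ 2)). { apply Rle_trans with (sqrt 1); [rewrite sqrt_1; lra | apply sqrt_le_1_alt; nra]. }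
 set (u := sqrt (1 + t ^ 2) + t - 1). replace (sqrt (1 + t ^ 2) + t) with (1 + u) by (unfold u; ring).
 assert (ut : t <= u) by (unfold u; lra).
 assert (A : t * ((C + 2) * (1 + C) - 1) >= 1) by nra.
 assert (X1 : (v + 2) * (1 + C) - 1 >= (C + 2) * (1 + C) - 1) by nra.
 assert (X2 : u * ((v + 2) * (1 + C) - 1) >= t * ((v + 2) * (1 + C) - 1)) by nra.
 assert (X3 : t * ((v + 2) * (1 + C) - 1) >= t * ((C + 2) * (1 + C) - 1)) by nra.
 assert (B : u * ((v + 2) * (1 + C) - 1) >= 1) by lra.
 assert (0 < 1 + C) by lra.
 apply (Rmult_le_reg_r (1 + C)); auto. nra. Qed.

Lemma KA_pos C : 0 < C -> 1 <= K_A C.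
Proof. intros HC. unfold K_A. assert (0 < 2 / (C * (C + 2))) by (apply Rdiv_lt_0_compat; nra).
 assert (1 <= sqrt (1 + (2 / (C * (C + 2))) ^ 2)) by (apply Rle_trans with (sqrt 1); [rewrite sqrt_1; lra | apply sqrt_le_1_alt; nra]). lra. Qed.

Lemma abs_ratio a b r : b <> 0 -> r = a / b -> Rabs a = Rabs r * Rabs b.
Proof. intros Hb ->. rewrite <- Rabs_mult. f_equal. field. auto. Qed.

Lemma partA V C m phi N : 0 < C -> solves V phi -> (m <= N)%nat -> (1 <= N)%nat -> (forall k, (N <= k)%nat -> C < V k) ->
    (forall k, (N <= k)%nat -> phi k <> 0) -> (forall k, (N <= k)%nat -> Rabs (phi (S k)) < Rabs (phi k)) ->
  linf (fun n => prod_range (fun l => (V l + 2) / K_A C) m n * phi n).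
Proof. intros HC Hs Hm HN HV Hnz Hd.
 assert (RF := rfacts V C phi N HC Hs HN HV Hnz Hd). assert (K1 := KA_pos C HC).
 assert (step : forall n, (N <= n)%nat -> Rabs (phi (S n)) * ((V (S n) + 2) / K_A C) <= Rabs (phi n)).
 { intros n Hn. destruct (RF n Hn) as [E1 B1]. destruct (RF (S n) ltac:(lia)) as [_ B2].
   set (r := phi n / phi (S n)) in *. set (r1 := phi (S n) / phi (S (S n))) in *.
   rewrite (abs_ratio (phi n) (phi (S n)) r) by (auto; apply Hnz; lia).
   rewrite (Rabs_pos_eq r) by lra.
   assert (HV1 := HV (S n) ltac:(lia)).
   assert (KI := KA_ineq C (V (S n)) (/ r1) HC HV1 ltac:(apply Rinv_0_lt_compat; lra)
     ltac:(apply (Rmult_lt_reg_r r1); [lra|]; field_simplify; lra)).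
   replace (V (S n) + 2 - / r1) with r in KI by lra. assert (T := Rabs_pos (phi (S n))).
   apply Rmult_le_compat_l with (r := Rabs (phi (S n))) in KI; auto.
   unfold Rdiv. apply (Rmult_le_reg_r (K_A C)); [lra|]. rewrite Rmult_assoc, Rmult_assoc, Rinv_l by lra. nra. }
 apply (linf_of _ N (Rabs (prod_range (fun l => (V l + 2) / K_A C) m N * phi N))).
 induction k. rewrite Nat.add_0_r; lra. rewrite Nat.add_succ_r. eapply Rle_trans; [|exact IHk].
 rewrite prod_range_S. replace (Nat.leb m (S (N + k))) with true by (symmetry; apply Nat.leb_le; lia).
 rewrite !Rabs_mult. rewrite (Rabs_pos_eq ((V (S (N + k)) + 2) / K_A C)).
 2:{ apply Rdiv_le_0_compat; [|lra]. assert (C < V (S (N + k))) by (apply HV; lia). lra. }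
 assert (T := Rabs_pos (prod_range (fun l => (V l + 2) / K_A C) m (N + k))).
 specialize (step (N + k)%nat ltac:(lia)). nra. Qed.

Definition lam (x : R) := (x + 2 + sqrt (x * (x + 4))) / 2.
Definition LL (C : R) := (1 + (C + 2) / sqrt (C * (C + 4))) / 2.

Lemma lam_facts x : 0 < x -> 1 <= lam x /\ lam x + / lam x = x + 2.
Proof. intros Hx. unfold lam. assert (S0 := sqrt_pos (x * (x + 4))).
 assert (S2 : sqrt (x * (x + 4)) * sqrt (x * (x + 4)) = x * (x + 4)) by (apply sqrt_sqrt; nra).
 set (s := sqrt (x * (x + 4))) in *.
 assert (Q : (x + 2 + s) / 2 * ((x + 2 + s) / 2) - (x + 2) * ((x + 2 + s) / 2) + 1 = 0) by nra.
 split. lra. set (l := (x + 2 + s) / 2) in *. assert (0 < l) by (unfold l; lra).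
 apply (Rmult_eq_reg_r l); [|lra]. rewrite Rmult_plus_distr_r, Rinv_l by lra. lra. Qed.

Lemma lam_lip C x y : 0 < C -> C < x -> C < y -> Rabs (lam x - lam y) <= LL C * Rabs (x - y).
Proof. intros HC Hx Hy. unfold lam, LL.
 assert (Sx : sqrt (x * (x + 4)) * sqrt (x * (x + 4)) = x * (x + 4)) by (apply sqrt_sqrt; nra).
 assert (Sy : sqrt (y * (y + 4)) * sqrt (y * (y + 4)) = y * (y + 4)) by (apply sqrt_sqrt; nra).
 assert (Sc : sqrt (C * (C + 4)) * sqrt (C * (C + 4)) = C * (C + 4)) by (apply sqrt_sqrt; nra).
 assert (px : 0 < sqrt (x * (x + 4))) by (apply sqrt_lt_R0; nra).
 assert (py : 0 < sqrt (y * (y + 4))) by (apply sqrt_lt_R0; nra).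
 assert (pc : 0 < sqrt (C * (C + 4))) by (apply sqrt_lt_R0; nra).
 set (sx := sqrt (x * (x + 4))) in *. set (sy := sqrt (y * (y + 4))) in *. set (sc := sqrt (C * (C + 4))) in *.
 assert (sq : forall a b, 0 <= a -> 0 <= b -> a * a <= b * b -> a <= b).
 { intros a b Ha Hb H. destruct (Rle_lt_dec a b); auto. nra. }
 assert (Bx : sc * (x + 2) <= (C + 2) * sx).
 { apply sq; [nra|nra|]. replace (sc * (x + 2) * (sc * (x + 2))) with (C * (C + 4) * ((x + 2) * (x + 2))) by (rewrite <- Sc; ring).
   replace ((C + 2) * sx * ((C + 2) * sx)) with ((C + 2) * (C + 2) * (x * (x + 4))) by (rewrite <- Sx; ring). nra. }
 assert (By : sc * (y + 2) <= (C + 2) * sy).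
 { apply sq; [nra|nra|]. replace (sc * (y + 2) * (sc * (y + 2))) with (C * (C + 4) * ((y + 2) * (y + 2))) by (rewrite <- Sc; ring).
   replace ((C + 2) * sy * ((C + 2) * sy)) with ((C + 2) * (C + 2) * (y * (y + 4))) by (rewrite <- Sy; ring). nra. }
 assert (E : Rabs (sx - sy) * (sx + sy) = Rabs (x - y) * (x + y + 4)).
 { rewrite <- (Rabs_pos_eq (sx + sy)) by lra. rewrite <- (Rabs_pos_eq (x + y + 4)) by lra. rewrite <- !Rabs_mult. f_equal. nra. }
 assert (D : Rabs (sx - sy) * sc <= Rabs (x - y) * (C + 2)).
 { apply (Rmult_le_reg_r (sx + sy)); [lra|]. assert (T := Rabs_pos (x - y)).
   replace (Rabs (sx - sy) * sc * (sx + sy)) with (Rabs (x - y) * (x + y + 4) * sc) by (rewrite <- E; ring). nra. }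
 assert (D2 : Rabs (sx - sy) <= Rabs (x - y) * ((C + 2) / sc)).
 { apply (Rmult_le_reg_r sc); auto. unfold Rdiv. rewrite Rmult_assoc, Rmult_assoc, Rinv_l by lra. lra. }
 replace ((x + 2 + sx) / 2 - (y + 2 + sy) / 2) with (((x - y) + (sx - sy)) / 2) by field.
 unfold Rdiv at 1. rewrite Rabs_mult, (Rabs_pos_eq (/ 2)) by lra.
 assert (T := Rabs_triang (x - y) (sx - sy)). lra. Qed.

Lemma exp_mono a b : a <= b -> exp a <= exp b.
Proof. intros H. destruct (Rle_lt_or_eq_dec _ _ H) as [H1|H1]. left; apply exp_increasing; auto. subst; lra. Qed.

Lemma partB V C m phi N : 0 < C -> solves V phi -> (m <= N)%nat -> (1 <= N)%nat -> (forall k, (N <= k)%nat -> C < V k) ->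
    (forall k, (N <= k)%nat -> phi k <> 0) -> (forall k, (N <= k)%nat -> Rabs (phi (S k)) < Rabs (phi k)) ->
  l1 (fun n => V (S n) - V n) ->
  linf (fun n => prod_range (fun l => (V l + 2 + sqrt (V l * (V l + 4))) / 2) m n * phi n).
Proof. intros HC Hs Hm HN HV Hnz Hd Hl1.
 assert (RF := rfacts V C phi N HC Hs HN HV Hnz Hd).
 pose (r := fun n => phi n / phi (S n)).
 pose (ln := fun n => lam (V n)).
 pose (d := fun n => r n - ln (S n)).
 pose (D := fun n => Rmax 0 (- d n)).
 assert (LF : forall n, (N <= n)%nat -> 1 <= ln n /\ ln n + / ln n = V n + 2).
 { intros n Hn. apply lam_facts. specialize (HV n Hn). lra. }
 assert (D0 : forall n, 0 <= D n) by (intros; apply Rmax_l).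
 assert (negd : forall n, (N <= n)%nat -> - d n = / r (S n) - / ln (S n)).
 { intros n Hn. destruct (RF n Hn) as [E _]. destruct (LF (S n) ltac:(lia)) as [_ E2]. unfold d. fold (r n) in E.
   change (/ (phi (S n) / phi (S (S n)))) with (/ r (S n)) in E. lra. }
 assert (F1 : forall n, (N <= n)%nat -> ln (S n) * Rabs (phi (S n)) <= (1 + D n) * Rabs (phi n)).
 { intros n Hn. rewrite (abs_ratio (phi n) (phi (S n)) (r n)) by (auto; apply Hnz; lia).
   destruct (RF n Hn) as [_ B]. fold (r n) in B. rewrite (Rabs_pos_eq (r n)) by lra.
   assert (T := Rabs_pos (phi (S n))). assert (T2 : ln (S n) <= (1 + D n) * r n).
   { unfold D. destruct (Rle_lt_dec 0 (d n)). rewrite Rmax_left by lra. unfold d in *. lra.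
     rewrite Rmax_right by lra. unfold d in *. nra. }
   nra. }
 assert (F2 : forall n, (N <= n)%nat -> D n <= 1).
 { intros n Hn. unfold D. apply Rmax_lub; [lra|]. rewrite negd by auto.
   destruct (RF (S n) ltac:(lia)) as [_ B]. fold (r (S n)) in B. destruct (LF (S n) ltac:(lia)) as [L1 _].
   assert (0 < / ln (S n)) by (apply Rinv_0_lt_compat; lra).
   assert (/ r (S n) < 1). { apply (Rmult_lt_reg_r (r (S n))); [lra|]. rewrite Rinv_l by lra. lra. }
   lra. }
 assert (F3 : forall n, (N <= n)%nat -> D n <= / (1 + C) * (Rabs (ln (S (S n)) - ln (S n)) + D (S n))).
 { intros n Hn. destruct (RF (S n) ltac:(lia)) as [_ B]. fold (r (S n)) in B. destruct (LF (S n) ltac:(lia)) as [L1 _].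
   assert (P0 : 0 <= Rabs (ln (S (S n)) - ln (S n)) + D (S n)) by (assert (T := Rabs_pos (ln (S (S n)) - ln (S n))); specialize (D0 (S n)); lra).
   unfold D at 1. apply Rmax_lub. apply Rmult_le_pos; [left; apply Rinv_0_lt_compat; lra| auto].
   rewrite negd by auto.
   assert (W : / r (S n) - / ln (S n) = (ln (S n) - r (S n)) * / (ln (S n) * r (S n))) by (field; lra).
   rewrite W.
   assert (w0 : 0 < / (ln (S n) * r (S n))) by (apply Rinv_0_lt_compat; nra).
   assert (w1 : / (ln (S n) * r (S n)) <= / (1 + C)) by (apply Rinv_le_contravar; nra).
   assert (X : ln (S n) - r (S n) <= Rabs (ln (S (S n)) - ln (S n)) + D (S n)).
   { assert (T1 := Rmax_r 0 (- d (S n))). fold (D (S n)) in T1. unfold d in T1.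
     assert (T2 := Rabs_maj2 (ln (S (S n)) - ln (S n))). lra. }
   nra. }
 pose (b := fun i => Rabs (V (S i) - V i)).
 assert (b0 : forall i, 0 <= b i) by (intros; apply Rabs_pos).
 set (Sb := Series b).
 assert (LL0 : 0 <= LL C).
 { unfold LL. assert (0 < sqrt (C * (C + 4))) by (apply sqrt_lt_R0; nra).
   assert (0 <= (C + 2) / sqrt (C * (C + 4))) by (apply Rdiv_le_0_compat; lra). lra. }
 assert (dl : forall n, (N <= n)%nat -> Rabs (ln (S (S n)) - ln (S n)) <= LL C * b (S n)).
 { intros n Hn. apply lam_lip; auto; apply HV; lia. }
 assert (SUM : forall k, fs (fun j => D (N + j)%nat) k <= (LL C * Sb + 1) / C).
 { intros k. set (Sk := fs (fun j => D (N + j)%nat) k).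
   assert (A1 : Sk <= fs (fun j => / (1 + C) * (LL C * b (S N + j)%nat + D (N + S j)%nat)) k).
   { apply fs_le. intros j Hj. eapply Rle_trans. apply F3. lia.
     rewrite Nat.add_succ_r. apply Rmult_le_compat_l. left; apply Rinv_0_lt_compat; lra.
     specialize (dl (N + j)%nat ltac:(lia)). simpl. lra. }
   rewrite (fs_scal (/ (1 + C)) (fun j => LL C * b (S N + j)%nat + D (N + S j)%nat)) in A1.
   rewrite (fs_plus (fun j => LL C * b (S N + j)%nat) (fun j => D (N + S j)%nat)) in A1.
   rewrite (fs_scal (LL C) (fun j => b (S N + j)%nat)) in A1.
   assert (A2 := fs_shift (fun j => D (N + j)%nat) k). simpl in A2.
   assert (A3 : D (N + 0)%nat >= 0) by (specialize (D0 (N + 0)%nat); lra).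
   assert (A4 : D (N + k)%nat <= 1) by (apply F2; lia).
   assert (A5 : fs b (S N + k) <= Sb) by (apply fs_le_series; auto).
   rewrite fs_add in A5. assert (A6 := fs_nonneg b (S N) b0).
   assert (A7 : fs (fun j => D (N + S j)%nat) k <= Sk + 1) by (fold Sk in A2; lra).
   assert (A8 : fs (fun j => b (S N + j)%nat) k <= Sb) by lra.
   assert (A9 : LL C * fs (fun j => b (S N + j)%nat) k <= LL C * Sb) by (apply Rmult_le_compat_l; auto).
   set (Q := LL C * fs (fun j => b (S N + j)%nat) k + fs (fun j => D (N + S j)%nat) k) in A1.
   assert (QB : Q <= LL C * Sb + Sk + 1) by (unfold Q; lra).
   assert (A10 : Sk * (1 + C) <= Q).
   { replace Q with (/ (1 + C) * Q * (1 + C)) by (field; lra). apply Rmult_le_compat_r; [lra|auto]. }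
   apply (Rmult_le_reg_r C); auto. unfold Rdiv. rewrite Rmult_assoc, Rinv_l by lra. lra. }
 set (f := fun l => (V l + 2 + sqrt (V l * (V l + 4))) / 2).
 set (P := fun n => prod_range f m n * phi n).
 apply (linf_of _ N (Rabs (P N) * exp ((LL C * Sb + 1) / C))).
 intros k. eapply Rle_trans with (Rabs (P N) * exp (fs (fun j => D (N + j)%nat) k)).
 2:{ apply Rmult_le_compat_l. apply Rabs_pos. apply exp_mono. apply SUM. }
 induction k. simpl. rewrite exp_0, Rmult_1_r, Nat.add_0_r. lra.
 rewrite Nat.add_succ_r. simpl fs. rewrite exp_plus.
 unfold P. rewrite prod_range_S. replace (Nat.leb m (S (N + k))) with true by (symmetry; apply Nat.leb_le; lia).
 rewrite !Rabs_mult. change (f (S (N + k))) with (ln (S (N + k))).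
 destruct (LF (S (N + k)) ltac:(lia)) as [L1 _]. rewrite (Rabs_pos_eq (ln _)) by lra.
 assert (T := Rabs_pos (prod_range f m (N + k))).
 specialize (F1 (N + k)%nat ltac:(lia)).
 assert (E1 := exp_ineq1_le (D (N + k)%nat)).
 unfold P in IHk. rewrite Rabs_mult in IHk.
 assert (T3 : 0 <= 1 + D (N + k)%nat) by (specialize (D0 (N + k)%nat); lra).
 assert (T4 := Rabs_pos (phi (N + k)%nat)).
 assert (T5 : 0 <= exp (fs (fun j => D (N + j)%nat) k)) by (left; apply exp_pos).
 set (A := Rabs (prod_range f m (N + k))) in *. set (p0 := Rabs (phi (N + k)%nat)) in *.
 set (X := Rabs (prod_range f m N * phi N)) in *. set (ES := exp (fs (fun j : nat => D (N + j)%nat) k)) in *.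
 set (DD := D (N + k)%nat) in *.
 assert (S1 : A * ln (S (N + k)) * Rabs (phi (S (N + k))) <= A * ((1 + DD) * p0)).
 { rewrite Rmult_assoc. apply Rmult_le_compat_l; auto. }
 assert (S2 : A * ((1 + DD) * p0) = (A * p0) * (1 + DD)) by ring.
 assert (S3 : (A * p0) * (1 + DD) <= (X * ES) * (1 + DD)) by (apply Rmult_le_compat_r; auto).
 assert (X0 : 0 <= X) by apply Rabs_pos.
 assert (S4 : (X * ES) * (1 + DD) <= (X * ES) * exp DD) by (apply Rmult_le_compat_l; nra).
 replace (Rabs (prod_range f m N) * Rabs (phi N)) with X by (unfold X; rewrite Rabs_mult; ring). nra. Qed.

Theorem corollary5 (V : nat -> R) (C : R) (m : nat) (phi : nat -> R) :
  0 < C ->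
  Rbar_lt (Finite C) (LimInf_seq V) ->
  (1 <= m)%nat ->
  subdominant V phi ->
  linf (fun n => prod_range (fun l => (V l + 2) / K_A C) m n * phi n)
  /\
  (l1 (fun n => V (S n) - V n) ->
   linf (fun n => prod_range
                    (fun l => (V l + 2 + sqrt (V l * (V l + 4))) / 2) m n
                  * phi n)).
Proof. intros HC HL Hm HS.
 destruct (setup V C m phi HC HL HS) as [N [H1 [H2 [H3 [H4 H5]]]]].
 destruct HS as [Hs _]. split.
 - apply (partA V C m phi N); auto.
 - intros Hl. apply (partB V C m phi N); auto. Qed.
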